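(* Let $G$ be a graph and $u$ a vertex of $G$ such that the configuration $\overline{\mathbf{c}_u}$ is solvable. Then $\mathbf{p}(u)=0$ for every pattern $\mathbf{p}$ with $N(G)\mathbf{p}=\overline{\mathbf{c}_u}$.
   Context: For a finite simple graph $G$ with vertex set $\{v_1,\dots,v_n\}$, the closed adjacency matrix $N(G)$ is the $n\times n$ matrix over $\mathbb{Z}_2$ whose $(i,j)$ entry is $1$ iff $i=j$ or $v_i$ is adjacent to $v_j$. Vectors in $\mathbb{Z}_2^{V(G)}$ are patterns/configurations; a configuration $\mathbf{c}$ is solvable if $N(G)\mathbf{p}=\mathbf{c}$ for some pattern $\mathbf{p}$. $\mathbf{1}$ is the all-ones vector, $\mathbf{c}_u$ is the vector with $\mathbf{c}_u(v)=1$ iff $v=u$, and $\overline{\mathbf{c}_u}:=\mathbf{c}_u+\mathbf{1}$. *)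

(* Defs.v *)
From mathcomp Require Import all_boot all_algebra.
Set Implicit Arguments. Unset Strict Implicit. Unset Printing Implicit Defensive.
Import GRing.Theory.
Local Open Scope ring_scope.

Definition simple_graph (n : nat) (e : rel 'I_n) : Prop :=
  symmetric e /\ irreflexive e.

Definition closed_adj (n : nat) (e : rel 'I_n) : 'M['F_2]_n :=
  \matrix_(i, j) (((i == j) || e i j)%B)%:R.

Definition cvec (n : nat) (u : 'I_n) : 'cV['F_2]_n :=
  \col_v ((v == u)%B)%:R.
Definition cbar (n : nat) (u : 'I_n) : 'cV['F_2]_n :=
  cvec u + const_mx 1.

Definition solvable (n : nat) (e : rel 'I_n) (c : 'cV['F_2]_n) : Prop :=
  exists p : 'cV['F_2]_n, closed_adj e *m p = c.

(* Main.v *)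
Require Import Defs.
From mathcomp Require Import all_boot all_algebra.
Import GRing.Theory.
Local Open Scope ring_scope.

Lemma F2_cases (x : 'F_2) : x = 0 \/ x = 1.
Proof. case: x => [[|[|//]]] H; [left|right]; exact: val_inj. Qed.

Lemma F2_dbl (x : 'F_2) : x + x = 0.
Proof. by case: (F2_cases x) => ->; [rewrite addr0|apply: val_inj]. Qed.

Lemma F2_sq (x : 'F_2) : x * x = x.
Proof. by case: (F2_cases x) => ->; rewrite ?mul0r ?mulr1. Qed.

Theorem lemma2p1 (n : nat) (e : rel 'I_n) (u : 'I_n) :
  simple_graph e ->
  solvable e (cbar u) ->
  forall p : 'cV['F_2]_n, closed_adj e *m p = cbar u -> p u 0 = 0.
Proof.
move=> [esym eirr] _ p Hp.
pose a i j := closed_adj e i j * p i 0 * p j 0.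
have asym i j : a i j = a j i.
  by rewrite /a !mxE eq_sym esym mulrAC.
have aii i : a i i = p i 0.
  by rewrite /a !mxE eqxx /= mul1r F2_sq.
have L : \sum_i p i 0 * (closed_adj e *m p) i 0 = \sum_i \sum_j a i j.
  apply: eq_bigr => i _; rewrite mxE big_distrr /=; apply: eq_bigr => j _.
  by rewrite /a mulrCA mulrA.
have R : \sum_i p i 0 * (closed_adj e *m p) i 0 = p u 0 + \sum_i p i 0.
  rewrite Hp /cbar.
  rewrite (eq_bigr (fun i => (if i == u then p i 0 else 0) + p i 0)); last first.
    by move=> i _; rewrite !mxE mulrDr mulr1; case: (i == u); rewrite ?mulr1 ?mulr0.
  rewrite big_split /= -big_mkcond /= big_pred1_eq //.
have D : \sum_i \sum_j a i j = \sum_i p i 0 + (\sum_(i : 'I_n) \sum_(j : 'I_n | (i < j)%N) a i j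
        + \sum_(i : 'I_n) \sum_(j : 'I_n | (j < i)%N) a i j).
  rewrite -!big_split /=; apply: eq_bigr => i _.
  rewrite (bigD1 i) //= aii; congr (_ + _).
  rewrite (bigID (fun j : 'I_n => (i < j)%N)) /=; congr (_ + _);
  apply: eq_bigl => j; rewrite andbC; case: ltngtP => //= H.
  - by apply/negP => /eqP ?; subst; rewrite ltnn in H.
  - by apply/negP => /eqP ?; subst; rewrite ltnn in H.
  - by apply/eqP/val_inj.
have E : \sum_(i : 'I_n) \sum_(j : 'I_n | (j < i)%N) a i j = \sum_(i : 'I_n) \sum_(j : 'I_n | (i < j)%N) a i j.
  rewrite (eq_bigr (fun i : 'I_n => \sum_(j : 'I_n) if (j < i)%N then a i j else 0));
    last by move=> i _; rewrite big_mkcond.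
  rewrite exchange_big /=; apply: eq_bigr => i _; rewrite [RHS]big_mkcond /=.
  by apply: eq_bigr => j _; rewrite asym.
move: D; rewrite E F2_dbl addr0 -L R => /eqP.
by rewrite -subr_eq0 addrK => /eqP.
Qed.
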